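(* Let $A=(Q,\Sigma,\delta,q_0,F)$ be a minimal poNFA (i.e., no poNFA with fewer states accepts $L(A)$). Then $L({}_{q_1}A)\neq L({}_{q_2}A)$ for all distinct states $q_1,q_2\in Q$, where ${}_qA=(Q,\Sigma,\delta,q,F)$.
   Context: NFAs have a single initial state and no $\varepsilon$-transitions. For an NFA with transition function $\delta$, write $p\leq q$ if $q\in\delta(p,w)$ for some word $w$; the NFA is a poNFA (partially ordered NFA) if $\leq$ is a partial order on its states. *)

(* Defs.v *)
From mathcomp Require Import all_boot.
Set Implicit Arguments. Unset Strict Implicit. Unset Printing Implicit Defensive.

Record nfa (Sigma : finType) := Nfa {
  state : finType;
  delta : state -> Sigma -> {set state};
  init : state;
  final : {set state}
}.

Section Defs.
Variable Sigma : finType.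

Definition delta_set (A : nfa Sigma) (S : {set state A}) (a : Sigma)
  : {set state A} := \bigcup_(p in S) delta p a.

Definition delta_word (A : nfa Sigma) (S : {set state A}) (w : seq Sigma)
  : {set state A} := foldl (delta_set (A:=A)) S w.

Definition delta_star (A : nfa Sigma) (p : state A) (w : seq Sigma)
  : {set state A} := delta_word [set p] w.

Definition lang (A : nfa Sigma) : pred (seq Sigma) :=
  fun w => [exists q in delta_star (init A) w, q \in final A].

Definition with_init (A : nfa Sigma) (q : state A) : nfa Sigma :=
  @Nfa Sigma (state A) (@delta Sigma A) q (final A).

Definition reach (A : nfa Sigma) (p q : state A) : Prop :=
  exists w : seq Sigma, q \in delta_star p w.

Definition is_poNFA (A : nfa Sigma) : Prop :=
  [/\ (forall p : state A, reach p p),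
      (forall p q : state A, reach p q -> reach q p -> p = q) &
      (forall p q r : state A, reach p q -> reach q r -> reach p r)].

Definition minimal_poNFA (A : nfa Sigma) : Prop :=
  is_poNFA A /\
  forall B : nfa Sigma, is_poNFA B -> lang B =i lang A ->
    #|state A| <= #|state B|.

End Defs.

(* Main.v *)
From Stdlib Require Import Classical.
Require Import Defs.
From mathcomp Require Import all_boot.
Set Implicit Arguments. Unset Strict Implicit. Unset Printing Implicit Defensive.

Section Aux.
Variable Sigma : finType.

Lemma ds_nil (A : nfa Sigma) (p q : state A) : (q \in delta_star p [::]) = (q == p).
Proof. by rewrite /delta_star /delta_word /= in_set1. Qed.

Lemma dw_iff (A : nfa Sigma) w : forall (S : {set state A}) q,
  q \in delta_word S w <-> exists2 p, p \in S & q \in delta_star p w.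
Proof.
elim: w => [|a w IH] S q.
  rewrite /delta_star /delta_word /=; split.
    by move=> H; exists q => //; rewrite in_set1.
  by case=> p Hp; rewrite in_set1 => /eqP->.
change (q \in delta_word (delta_set S a) w <->
  exists2 p, p \in S & q \in delta_word (delta_set [set p] a) w).
rewrite IH; split.
  case=> r /bigcupP [p Hp Hr] Hq; exists p => //; apply/IH.
  by exists r => //; apply/bigcupP; exists p => //; rewrite in_set1.
case=> p Hp /IH [r /bigcupP [p']]; rewrite in_set1 => /eqP -> Hr Hq.
by exists r => //; apply/bigcupP; exists p.
Qed.

Lemma ds_cons (A : nfa Sigma) (p : state A) a w q :
  q \in delta_star p (a :: w) <-> exists2 r, r \in delta p a & q \in delta_star r w.
Proof.
change (q \in delta_word (delta_set [set p] a) w <->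
  exists2 r, r \in delta p a & q \in delta_star r w).
rewrite dw_iff; split.
  by case=> r /bigcupP [p']; rewrite in_set1 => /eqP -> Hr Hq; exists r.
by case=> r Hr Hq; exists r => //; apply/bigcupP; exists p => //; rewrite in_set1.
Qed.

Definition acc (A : nfa Sigma) (x : state A) w :=
  [exists q in delta_star x w, q \in final A].

Lemma acc_nil (A : nfa Sigma) (x : state A) : acc x [::] = (x \in final A).
Proof.
rewrite /acc; apply/existsP/idP.
  by case=> q /andP[]; rewrite ds_nil => /eqP->.
by move=> H; exists x; rewrite ds_nil eqxx.
Qed.

Lemma acc_cons (A : nfa Sigma) (x : state A) a w :
  acc x (a :: w) <-> exists2 r, r \in delta x a & acc r w.
Proof.
split.
  case/existsP => q /andP [/ds_cons [r Hr Hq] Hf].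
  by exists r => //; apply/existsP; exists q; rewrite Hq.
case=> r Hr /existsP [q /andP[Hq Hf]].
by apply/existsP; exists q; rewrite Hf andbT; apply/ds_cons; exists r.
Qed.

Lemma lang_acc (A : nfa Sigma) (q : state A) w : lang (with_init q) w = acc q w.
Proof. by []. Qed.

Lemma lang_init (A : nfa Sigma) w : lang A w = acc (init A) w.
Proof. by []. Qed.

Lemma reach_refl (A : nfa Sigma) (p : state A) : reach p p.
Proof. by exists [::]; rewrite ds_nil. Qed.

Lemma reach_step (A : nfa Sigma) (p r q : state A) a :
  r \in delta p a -> reach r q -> reach p q.
Proof. by move=> Hr [w Hw]; exists (a :: w); apply/ds_cons; exists r. Qed.

Lemma reach_ind (A : nfa Sigma) (P : state A -> state A -> Prop) :
  (forall p, P p p) ->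
  (forall p r q a, r \in delta p a -> P r q -> P p q) ->
  forall p q, reach p q -> P p q.
Proof.
move=> H0 HS p q [w]; elim: w p => [|a w IH] p.
  by rewrite ds_nil => /eqP->.
by case/ds_cons=> s Hs Hq; apply: HS Hs _; apply: IH.
Qed.

Lemma reach_trans (A : nfa Sigma) (p q r : state A) :
  reach p q -> reach q r -> reach p r.
Proof.
move=> H; move: p q H r; apply: reach_ind => // p s q a Hs IH r Hqr.
exact: reach_step Hs (IH _ Hqr).
Qed.

Section Merge.
Variables (A : nfa Sigma) (q1 q2 : state A) (Hne : q2 != q1).
Hypothesis Heq : forall w, acc q1 w = acc q2 w.
Hypothesis nr : ~ reach q2 q1.
Hypothesis Apo : is_poNFA A.

Definition sT := {x : state A | x != q1}.
Definition d : sT := exist _ q2 Hne.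
Definition g (x : state A) : sT := insubd d x.

Lemma valg x : val (g x) = if x == q1 then q2 else x.
Proof. by rewrite /g val_insubd; case: eqP. Qed.

Definition B : nfa Sigma :=
  @Nfa Sigma sT (fun u a => g @: delta (val u) a) (g (init A))
    [set u : sT | val u \in final A].

Lemma accB w : forall u : sT, @acc B u w = acc (val u) w.
Proof.
elim: w => [|a w IH] u; first by rewrite !acc_nil inE.
apply/idP/idP => /acc_cons-[r Hr H]; apply/acc_cons.
  case/imsetP: Hr => z Hz Er; subst r; exists z => //.
  move: H; rewrite IH valg; case: eqP => [->|_] //; by rewrite Heq.
exists (g r); first by apply/imsetP; exists r.
rewrite IH valg; case: eqP => [Er|_] //; by rewrite -Heq -Er.
Qed.

Lemma langB : lang B =i lang A.
Proof.
move=> w.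
change (@acc B (g (init A)) w = acc (init A) w :> bool).
rewrite accB valg; case: eqP => [->|_] //; by rewrite Heq.
Qed.

Definition R (u v : sT) := reach (val u) (val v) \/
  (reach (val u) q1 /\ reach q2 (val v)).

Lemma reachB (u v : sT) : @reach Sigma B u v -> R u v.
Proof.
move: u v; apply: (@reach_ind B R); first by move=> p; left; apply: reach_refl.
move=> p r q a /imsetP[z Hz ->]; rewrite /R valg; case: eqP => [Ez|_].
  subst z => H; right; split; first exact: reach_step Hz (reach_refl _).
  by case: H => [H|[_ H]].
case=> [H|[H1 H2]]; first by left; apply: reach_step Hz H.
by right; split => //; apply: reach_step Hz H1.
Qed.

Lemma poB : is_poNFA B.
Proof.
split; [exact: reach_refl| |exact: reach_trans].
move=> u v Huv Hvu; apply: val_inj.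
case: Apo => _ anti _.
case: (reachB Huv) => [H1|[H1 H2]]; case: (reachB Hvu) => [H3|[H3 H4]].
- exact: anti.
- by exfalso; apply: nr; apply: reach_trans H4 (reach_trans H1 H3).
- by exfalso; apply: nr; apply: reach_trans H2 (reach_trans H3 H1).
- by exfalso; apply: nr; apply: reach_trans H4 H1.
Qed.

Lemma cardB : #|state B| < #|state A|.
Proof.
change (#|{: sT}| < #|state A|).
rewrite card_sig cardC1.
have : 0 < #|state A| by apply/card_gt0P; exists q1.
by case: #|_|.
Qed.

End Merge.
End Aux.

Theorem lemma12 (Sigma : finType) (A : nfa Sigma) :
  minimal_poNFA A ->
  forall q1 q2 : state A, q1 != q2 ->
    ~ (lang (with_init q1) =i lang (with_init q2)).
Proof.
move=> [Apo Hmin] q1 q2 Hne Hl.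
have Heq : forall w, acc q1 w = acc q2 w.
  by move=> w; rewrite -!lang_acc; apply: Hl.
case: (classic (reach q2 q1)) => H21.
  case: (classic (reach q1 q2)) => H12.
    by case: Apo => _ anti _; move/eqP: Hne; apply; apply: anti.
  have Hne' : q1 != q2 by [].
  have := Hmin _ (poB Hne' H12 Apo) (langB Hne' (fun w => esym (Heq w))).
  by rewrite leqNgt cardB.
have Hne' : q2 != q1 by rewrite eq_sym.
have := Hmin _ (poB Hne' H21 Apo) (langB Hne' Heq).
by rewrite leqNgt cardB.
Qed.
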